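(* Let $(\gamma,v_1,v_2):I\to H^3\times\Delta_5$ be a hyperbolic framed curve with $a^2+b^2\neq0$ and $M^2>A^2$ on $I$, and let $\mathcal{F}^d$ be its de Sitter focal surface. Let $t_0\in I$. If $(MA'-AM',N)(t_0)=(0,0)$, then every point $(t_0,\theta)$ is a singular point of $\mathcal{F}^d$. If $(MA'-AM',N)(t_0)\neq(0,0)$, then there exists a singular point of $\mathcal{F}^d$ of the form $(t_0,\theta_0)$.
   Context: $\mathbb{R}^4_1$ denotes $\mathbb{R}^4$ with $\langle x,y\rangle=-x_0y_0+x_1y_1+x_2y_2+x_3y_3$; $H^3=\{x:\langle x,x\rangle=-1\}$, $S^3_1=\{x:\langle x,x\rangle=1\}$. For $x^1,x^2,x^3\in\mathbb{R}^4_1$, $x^1\wedge x^2\wedge x^3$ is the vector given by the formal determinant with first row $(-e_0,e_1,e_2,e_3)$ and the components of $x^1,x^2,x^3$ as remaining rows. Let $\Delta_5=\{(v_1,v_2)\in S^3_1\times S^3_1:\langle v_1,v_2\rangle=0\}$. A hyperbolic framed curve is a smooth map $(\gamma,v_1,v_2):I\to H^3\times\Delta_5$ with $\langle\gamma,v_i\rangle=\langle\gamma',v_i\rangle=0$. Put $\mu=\gamma\wedge v_1\wedge v_2$; then $\gamma'=m\mu$, $v_1'=nv_2+a\mu$, $v_2'=-nv_1+b\mu$, $\mu'=m\gamma-av_1-bv_2$ with $m=\langle\gamma',\mu\rangle$, $n=\langle v_1',v_2\rangle$, $a=\langle v_1',\mu\rangle$, $b=\langle v_2',\mu\rangle$.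 Put $f=ab'-a'b+n(a^2+b^2)$. With $a^2+b^2\neq0$, the Frenet type frame is $n_1=(av_1+bv_2)/\sqrt{a^2+b^2}$, $n_2=(-bv_1+av_2)/\sqrt{a^2+b^2}$, giving $\gamma'=M\mu$, $n_1'=Nn_2+A\mu$, $n_2'=-Nn_1$, $\mu'=M\gamma-An_1$ with $M=m$, $N=f/(a^2+b^2)$, $A=\sqrt{a^2+b^2}$. The de Sitter focal surface ($M^2>A^2$) is $\mathcal{F}^d:I\times[0,2\pi]\to S^3_1$, $\mathcal{F}^d(t,\theta)=\frac{\cos\theta}{\sqrt{M^2-A^2}}(A\gamma-Mn_1)+\sin\theta\,n_2$. A singular point is a point where $d\mathcal{F}^d$ has rank $<2$; the singular set is the zero set of $\lambda^d=\det(\mathcal{F}^d,\mathcal{F}^d_t,\mathcal{F}^d_\theta,\mu)=\frac{\cos\theta(MA'-AM')-\sin\theta\,AN\sqrt{M^2-A^2}}{M^2-A^2}$. *)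

(* Defs.v *)
From Stdlib Require Import Reals Lra.
From Coquelicot Require Import Coquelicot.
Open Scope R_scope.

Record V4 := mkV4 { p0 : R; p1 : R; p2 : R; p3 : R }.

Definition vadd (x y : V4) : V4 :=
  mkV4 (p0 x + p0 y) (p1 x + p1 y) (p2 x + p2 y) (p3 x + p3 y).
Definition vscal (c : R) (x : V4) : V4 :=
  mkV4 (c * p0 x) (c * p1 x) (c * p2 x) (c * p3 x).
Definition vzero : V4 := mkV4 0 0 0 0.

Definition lor (x y : V4) : R :=
  - p0 x * p0 y + p1 x * p1 y + p2 x * p2 y + p3 x * p3 y.

Definition det3 (a11 a12 a13 a21 a22 a23 a31 a32 a33 : R) : R :=
  a11 * (a22 * a33 - a23 * a32) - a12 * (a21 * a33 - a23 * a31)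
  + a13 * (a21 * a32 - a22 * a31).

(* x ^ y ^ z : formal determinant with first row (-e0, e1, e2, e3),
   expanded along the first row. *)
Definition wedge3 (x y z : V4) : V4 :=
  let D0 := det3 (p1 x) (p2 x) (p3 x) (p1 y) (p2 y) (p3 y) (p1 z) (p2 z) (p3 z) in
  let D1 := det3 (p0 x) (p2 x) (p3 x) (p0 y) (p2 y) (p3 y) (p0 z) (p2 z) (p3 z) in
  let D2 := det3 (p0 x) (p1 x) (p3 x) (p0 y) (p1 y) (p3 y) (p0 z) (p1 z) (p3 z) in
  let D3 := det3 (p0 x) (p1 x) (p2 x) (p0 y) (p1 y) (p2 y) (p0 z) (p1 z) (p2 z) in
  mkV4 (- D0) (- D1) D2 (- D3).

Definition dV (g : R -> V4) (t : R) : V4 :=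
  mkV4 (Derive (fun s => p0 (g s)) t) (Derive (fun s => p1 (g s)) t)
       (Derive (fun s => p2 (g s)) t) (Derive (fun s => p3 (g s)) t).

Definition smooth_on (I : R -> Prop) (f : R -> R) : Prop :=
  forall (k : nat) (t : R), I t -> ex_derive_n f k t.
Definition smoothV_on (I : R -> Prop) (g : R -> V4) : Prop :=
  smooth_on I (fun s => p0 (g s)) /\ smooth_on I (fun s => p1 (g s)) /\
  smooth_on I (fun s => p2 (g s)) /\ smooth_on I (fun s => p3 (g s)).

Definition hyp_framed_curve (I : R -> Prop) (g v1 v2 : R -> V4) : Prop :=
  smoothV_on I g /\ smoothV_on I v1 /\ smoothV_on I v2 /\
  forall t, I t ->
    lor (g t) (g t) = -1 /\
    lor (v1 t) (v1 t) = 1 /\ lor (v2 t) (v2 t) = 1 /\ lor (v1 t) (v2 t) = 0 /\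
    lor (g t) (v1 t) = 0 /\ lor (g t) (v2 t) = 0 /\
    lor (dV g t) (v1 t) = 0 /\ lor (dV g t) (v2 t) = 0.



Definition mu (g v1 v2 : R -> V4) (t : R) : V4 := wedge3 (g t) (v1 t) (v2 t).
Definition cm (g v1 v2 : R -> V4) (t : R) : R := lor (dV g t) ((mu g v1 v2) t).
Definition cn (g v1 v2 : R -> V4) (t : R) : R := lor (dV v1 t) (v2 t).
Definition ca (g v1 v2 : R -> V4) (t : R) : R := lor (dV v1 t) ((mu g v1 v2) t).
Definition cb (g v1 v2 : R -> V4) (t : R) : R := lor (dV v2 t) ((mu g v1 v2) t).
Definition cf (g v1 v2 : R -> V4) (t : R) : R :=
  (ca g v1 v2) t * Derive (cb g v1 v2) t - Derive (ca g v1 v2) t * (cb g v1 v2) t + (cn g v1 v2) t * ((ca g v1 v2) t ^ 2 + (cb g v1 v2) t ^ 2).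

Definition cM (g v1 v2 : R -> V4) (t : R) : R := (cm g v1 v2) t.
Definition cN (g v1 v2 : R -> V4) (t : R) : R := (cf g v1 v2) t / ((ca g v1 v2) t ^ 2 + (cb g v1 v2) t ^ 2).
Definition cA (g v1 v2 : R -> V4) (t : R) : R := sqrt ((ca g v1 v2) t ^ 2 + (cb g v1 v2) t ^ 2).

Definition fn1 (g v1 v2 : R -> V4) (t : R) : V4 :=
  vscal (/ (cA g v1 v2) t) (vadd (vscal ((ca g v1 v2) t) (v1 t)) (vscal ((cb g v1 v2) t) (v2 t))).
Definition fn2 (g v1 v2 : R -> V4) (t : R) : V4 :=
  vscal (/ (cA g v1 v2) t) (vadd (vscal (- (cb g v1 v2) t) (v1 t)) (vscal ((ca g v1 v2) t) (v2 t))).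

Definition focalD (g v1 v2 : R -> V4) (t th : R) : V4 :=
  vadd (vscal (cos th / sqrt ((cM g v1 v2) t ^ 2 - (cA g v1 v2) t ^ 2))
              (vadd (vscal ((cA g v1 v2) t) (g t)) (vscal (- (cM g v1 v2) t) ((fn1 g v1 v2) t))))
       (vscal (sin th) ((fn2 g v1 v2) t)).

Definition focalD_t (g v1 v2 : R -> V4) (t th : R) : V4 := dV (fun s => (focalD g v1 v2) s th) t.
Definition focalD_th (g v1 v2 : R -> V4) (t th : R) : V4 := dV (fun s => (focalD g v1 v2) t s) th.

(* singular point: the differential (F_t, F_theta) has rank < 2, i.e.
   the two partial derivatives are linearly dependent *)
Definition singular_point (g v1 v2 : R -> V4) (t th : R) : Prop :=
  exists al be : R, (al <> 0 \/ be <> 0) /\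
    vadd (vscal al ((focalD_t g v1 v2) t th)) (vscal be ((focalD_th g v1 v2) t th)) = vzero.

(* Main.v *)
Require Import Defs.
From Stdlib Require Import Reals Lra.
From Coquelicot Require Import Coquelicot.
Open Scope R_scope.

Definition pc (k:nat) (x:V4) : R := match k with 0%nat => p0 x | 1%nat => p1 x | 2%nat => p2 x | _ => p3 x end.
Lemma V4_eq x y : (forall k, pc k x = pc k y) -> x = y.
Proof. destruct x, y; intros H; f_equal; [apply (H 0%nat)|apply (H 1%nat)|apply (H 2%nat)|apply (H 3%nat)]. Qed.
Lemma pc_add k x y : pc k (vadd x y) = pc k x + pc k y.
Proof. destruct k as [|[|[|k]]]; reflexivity. Qed.
Lemma pc_scal k c x : pc k (vscal c x) = c * pc k x.
Proof. destruct k as [|[|[|k]]]; reflexivity. Qed.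
Lemma pc_zero k : pc k vzero = 0.
Proof. destruct k as [|[|[|k]]]; reflexivity. Qed.
Lemma pc_dV k h t : pc k (dV h t) = Derive (fun s => pc k (h s)) t.
Proof. destruct k as [|[|[|k]]]; reflexivity. Qed.

Lemma plus_d (f g : R -> R) t df dg : is_derive f t df -> is_derive g t dg ->
  is_derive (fun s => f s + g s) t (df + dg).
Proof. intros Hf Hg. exact (is_derive_plus f g t df dg Hf Hg). Qed.
Lemma mult_d (f g : R -> R) t df dg : is_derive f t df -> is_derive g t dg ->
  is_derive (fun s => f s * g s) t (df * g t + f t * dg).
Proof. intros Hf Hg. exact (is_derive_mult f g t df dg Hf Hg Rmult_comm). Qed.
Lemma opp_d (f : R -> R) t df : is_derive f t df -> is_derive (fun s => - f s) t (- df).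
Proof. intros Hf. exact (is_derive_opp f t df Hf). Qed.

Lemma is_derive_val (f : R -> R) (t l l' : R) : is_derive f t l -> l = l' -> is_derive f t l'.
Proof. intros H <-; exact H. Qed.

Definition isDV (h : R -> V4) (t : R) (v : V4) :=
  forall k, is_derive (fun s => pc k (h s)) t (pc k v).

Lemma isDV_dV h t v : isDV h t v -> dV h t = v.
Proof. intro H; apply V4_eq; intro k; rewrite pc_dV; apply is_derive_unique; apply H. Qed.

Lemma isDV_add x y t x' y' : isDV x t x' -> isDV y t y' ->
  isDV (fun s => vadd (x s) (y s)) t (vadd x' y').
Proof.
  intros Hx Hy k. rewrite pc_add.
  apply (is_derive_ext (fun s => pc k (x s) + pc k (y s))).
  { intro s; symmetry; apply pc_add. }
  apply plus_d; auto.
Qed.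

Lemma isDV_scal (c : R -> R) c' h t v : is_derive c t c' -> isDV h t v ->
  isDV (fun s => vscal (c s) (h s)) t (vadd (vscal c' (h t)) (vscal (c t) v)).
Proof.
  intros Hc Hh k. rewrite pc_add, !pc_scal.
  apply (is_derive_ext (fun s => c s * pc k (h s))).
  { intro s; symmetry; apply pc_scal. }
  replace (c' * pc k (h t) + c t * pc k v) with (c' * pc k (h t) + c t * pc k v) by ring.
  apply mult_d; auto.
Qed.

Lemma isDV_ex h t : (forall k, ex_derive (fun s => pc k (h s)) t) -> isDV h t (dV h t).
Proof. intros H k; rewrite pc_dV; apply Derive_correct; auto. Qed.

Lemma lor_deriv x y t x' y' : isDV x t x' -> isDV y t y' ->
  is_derive (fun s => lor (x s) (y s)) t (lor x' (y t) + lor (x t) y').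
Proof.
  intros Hx Hy.
  pose proof (Hx 0%nat) as X0; pose proof (Hx 1%nat) as X1; pose proof (Hx 2%nat) as X2; pose proof (Hx 3%nat) as X3.
  pose proof (Hy 0%nat) as Y0; pose proof (Hy 1%nat) as Y1; pose proof (Hy 2%nat) as Y2; pose proof (Hy 3%nat) as Y3.
  simpl in X0, X1, X2, X3, Y0, Y1, Y2, Y3.
  eapply is_derive_val.
  { unfold lor.
    apply plus_d; [apply plus_d; [apply plus_d|]|].
    - apply mult_d; [apply opp_d|]; eassumption.
    - apply mult_d; eassumption.
    - apply mult_d; eassumption.
    - apply mult_d; eassumption. }
  cbv beta; unfold lor; ring.
Qed.

Lemma lor_sym x y : lor x y = lor y x.
Proof. unfold lor; ring. Qed.

Lemma lor_mm (u1 u2 u3 : V4) : let m := wedge3 u1 u2 u3 in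
  let g11 := lor u1 u1 in let g12 := lor u1 u2 in let g13 := lor u1 u3 in
  let g22 := lor u2 u2 in let g23 := lor u2 u3 in let g33 := lor u3 u3 in
  lor m m = - (g11*(g22*g33 - g23*g23) - g12*(g12*g33 - g23*g13) + g13*(g12*g23 - g22*g13)).
Proof. destruct u1, u2, u3. unfold lor, wedge3, det3; simpl. ring. Qed.

Lemma expand0 (u1 u2 u3 x : V4) k : let m := wedge3 u1 u2 u3 in
  let g11 := lor u1 u1 in let g12 := lor u1 u2 in let g13 := lor u1 u3 in
  let g22 := lor u2 u2 in let g23 := lor u2 u3 in let g33 := lor u3 u3 in
  let a11 := g22*g33 - g23*g23 in let a22 := g11*g33 - g13*g13 in let a33 := g11*g22-g12*g12 in
  let a12 := g13*g23 - g12*g33 in let a13 := g12*g23 - g13*g22 in let a23 := g12*g13 - g11*g23 in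
  lor m m * pc k x = - (a11 * lor x u1 * pc k u1 + a12 * lor x u2 * pc k u1 + a13 * lor x u3 * pc k u1
     + a12 * lor x u1 * pc k u2 + a22 * lor x u2 * pc k u2 + a23 * lor x u3 * pc k u2
     + a13 * lor x u1 * pc k u3 + a23 * lor x u2 * pc k u3 + a33 * lor x u3 * pc k u3) + lor x m * pc k m.
Proof. destruct u1, u2, u3, x. unfold lor, wedge3, det3; destruct k as [|[|[|k]]]; simpl; ring. Qed.

Lemma frame_expand u1 u2 u3 x :
  lor u1 u1 = -1 -> lor u2 u2 = 1 -> lor u3 u3 = 1 -> lor u1 u2 = 0 -> lor u1 u3 = 0 -> lor u2 u3 = 0 ->
  x = vadd (vadd (vscal (- lor x u1) u1) (vscal (lor x u2) u2))
           (vadd (vscal (lor x u3) u3) (vscal (lor x (wedge3 u1 u2 u3)) (wedge3 u1 u2 u3))).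
Proof.
  intros H11 H22 H33 H12 H13 H23.
  assert (Hm : lor (wedge3 u1 u2 u3) (wedge3 u1 u2 u3) = 1).
  { rewrite lor_mm; cbv zeta. rewrite H11, H22, H33, H12, H13, H23. ring. }
  apply V4_eq; intro k.
  pose proof (expand0 u1 u2 u3 x k) as E. cbv zeta in E.
  rewrite Hm, H11, H22, H33, H12, H13, H23 in E.
  rewrite !pc_add, !pc_scal. lra.
Qed.

Lemma deriv_const_zero lo hi (f : R -> R) t l c : lo < t < hi ->
  (forall s, lo < s < hi -> f s = c) -> is_derive f t l -> l = 0.
Proof.
  intros Ht Hf Hd.
  assert (Ho : open (fun s => lo < s < hi)) by (apply open_and; [apply open_gt|apply open_lt]).
  assert (Hl : locally t (fun s => (fun _ => c) s = f s)).
  { eapply filter_imp; [|apply (Ho t Ht)]. intros s Hs. symmetry; apply Hf; exact Hs. }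
  pose proof (is_derive_ext_loc _ _ _ _ Hl (is_derive_const c t)) as H0.
  pose proof (is_derive_unique _ _ _ Hd) as E1. pose proof (is_derive_unique _ _ _ H0) as E2.
  rewrite E1 in E2. exact E2.
Qed.

Lemma smooth_ex I h t : smoothV_on I h -> I t -> forall k, ex_derive (fun s => pc k (h s)) t.
Proof.
  intros (H0 & H1 & H2 & H3) Ht k; destruct k as [|[|[|k]]].
  - exact (H0 1%nat t Ht).
  - exact (H1 1%nat t Ht).
  - exact (H2 1%nat t Ht).
  - exact (H3 1%nat t Ht).
Qed.

Lemma smooth_ex2 I h t : smoothV_on I h -> I t -> forall k, ex_derive (fun s => pc k (dV h s)) t.
Proof.
  intros (H0 & H1 & H2 & H3) Ht k; destruct k as [|[|[|k]]].
  - exact (H0 2%nat t Ht).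
  - exact (H1 2%nat t Ht).
  - exact (H2 2%nat t Ht).
  - exact (H3 2%nat t Ht).
Qed.

Lemma lin4 (F : R -> R -> R -> R -> R) xg x1 x2 xm :
  (forall p q r s, F p q r s = F 1 0 0 0 * p + F 0 1 0 0 * q + F 0 0 1 0 * r + F 0 0 0 1 * s) ->
  F 1 0 0 0 = 0 -> F 0 1 0 0 = 0 -> F 0 0 1 0 = 0 -> F 0 0 0 1 = 0 -> F xg x1 x2 xm = 0.
Proof. intros H A B C D. rewrite H, A, B, C, D. ring. Qed.

Lemma minus_d (f g : R -> R) t df dg : is_derive f t df -> is_derive g t dg ->
  is_derive (fun s => f s - g s) t (df - dg).
Proof. intros Hf Hg. exact (is_derive_minus f g t df dg Hf Hg). Qed.
Lemma pow2_d (f : R -> R) t df : is_derive f t df -> is_derive (fun s => f s ^ 2) t (2 * f t * df).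
Proof.
  intros Hf. apply (is_derive_ext (fun s => f s * f s)); [intro s; change (f s * f s = f s ^ 2); ring|].
  eapply is_derive_val; [apply mult_d; eassumption| ring].
Qed.
Lemma sqrt_d (f : R -> R) t df : is_derive f t df -> 0 < f t ->
  is_derive (fun s => sqrt (f s)) t (df / (2 * sqrt (f t))).
Proof. intros; apply is_derive_sqrt; auto. Qed.
Lemma inv_d (f : R -> R) t df : is_derive f t df -> f t <> 0 ->
  is_derive (fun s => / f s) t (- df / f t ^ 2).
Proof. intros; apply is_derive_inv; auto. Qed.
Lemma const_d (c t : R) : is_derive (fun _ => c) t 0.
Proof. exact (is_derive_const c t). Qed.

Lemma isDV_val h t v v' : isDV h t v -> v = v' -> isDV h t v'.
Proof. intros H <-; exact H. Qed.
Lemma isDV_const (v : V4) t : isDV (fun _ => v) t vzero.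
Proof. intro k; rewrite pc_zero; apply const_d. Qed.
Lemma cosdiv_d (S th : R) : is_derive (fun s => cos s / S) th (- sin th / S).
Proof. auto_derive; [exact I| unfold Rdiv; ring]. Qed.
Lemma sin_d (th : R) : is_derive sin th (cos th).
Proof. auto_derive; [exact I| ring]. Qed.
Lemma lin3 (F : R -> R -> R -> R) x1 x2 xm :
  (forall q r s, F q r s = F 1 0 0 * q + F 0 1 0 * r + F 0 0 1 * s) ->
  F 1 0 0 = 0 -> F 0 1 0 = 0 -> F 0 0 1 = 0 -> F x1 x2 xm = 0.
Proof. intros H B C D. rewrite H, B, C, D. ring. Qed.


Lemma frame_derivs lo hi g v1 v2 t0 :
  hyp_framed_curve (fun t => lo < t < hi) g v1 v2 -> lo < t0 < hi ->
  dV g t0 = vscal (cm g v1 v2 t0) (mu g v1 v2 t0) /\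
  dV v1 t0 = vadd (vscal (cn g v1 v2 t0) (v2 t0)) (vscal (ca g v1 v2 t0) (mu g v1 v2 t0)) /\
  dV v2 t0 = vadd (vscal (- cn g v1 v2 t0) (v1 t0)) (vscal (cb g v1 v2 t0) (mu g v1 v2 t0)).
Proof.
  intros HF Ht.
  destruct HF as (Hsg & Hsv1 & Hsv2 & Hc).
  pose proof (isDV_ex g t0 (smooth_ex _ _ _ Hsg Ht)) as Dg.
  pose proof (isDV_ex v1 t0 (smooth_ex _ _ _ Hsv1 Ht)) as D1.
  pose proof (isDV_ex v2 t0 (smooth_ex _ _ _ Hsv2 Ht)) as D2.
  destruct (Hc t0 Ht) as (Hgg & H11 & H22 & H12 & Hg1 & Hg2 & Hdg1 & Hdg2).
  assert (Egg : lor (dV g t0) (g t0) + lor (g t0) (dV g t0) = 0).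
  { eapply (deriv_const_zero lo hi _ t0 _ (-1)); [exact Ht| |apply lor_deriv; eauto].
    intros s Hs; apply (Hc s Hs). }
  assert (Eg1 : lor (dV g t0) (v1 t0) + lor (g t0) (dV v1 t0) = 0).
  { eapply (deriv_const_zero lo hi _ t0 _ 0); [exact Ht| |apply lor_deriv; eauto].
    intros s Hs; apply (Hc s Hs). }
  assert (Eg2 : lor (dV g t0) (v2 t0) + lor (g t0) (dV v2 t0) = 0).
  { eapply (deriv_const_zero lo hi _ t0 _ 0); [exact Ht| |apply lor_deriv; eauto].
    intros s Hs; apply (Hc s Hs). }
  assert (E11 : lor (dV v1 t0) (v1 t0) + lor (v1 t0) (dV v1 t0) = 0).
  { eapply (deriv_const_zero lo hi _ t0 _ 1); [exact Ht| |apply lor_deriv; eauto].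
    intros s Hs; apply (Hc s Hs). }
  assert (E22 : lor (dV v2 t0) (v2 t0) + lor (v2 t0) (dV v2 t0) = 0).
  { eapply (deriv_const_zero lo hi _ t0 _ 1); [exact Ht| |apply lor_deriv; eauto].
    intros s Hs; apply (Hc s Hs). }
  assert (E12 : lor (dV v1 t0) (v2 t0) + lor (v1 t0) (dV v2 t0) = 0).
  { eapply (deriv_const_zero lo hi _ t0 _ 0); [exact Ht| |apply lor_deriv; eauto].
    intros s Hs; apply (Hc s Hs). }
  rewrite (lor_sym (g t0) (dV g t0)) in Egg.
  rewrite (lor_sym (g t0)) in Eg1, Eg2.
  rewrite (lor_sym (v1 t0) (dV v1 t0)) in E11.
  rewrite (lor_sym (v2 t0) (dV v2 t0)) in E22.
  rewrite (lor_sym (v1 t0) (dV v2 t0)) in E12.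
  assert (H21 : lor (v2 t0) (v1 t0) = 0) by (rewrite lor_sym; exact H12).
  pose proof (frame_expand _ _ _ (dV g t0) Hgg H11 H22 Hg1 Hg2 H12) as Xg.
  pose proof (frame_expand _ _ _ (dV v1 t0) Hgg H11 H22 Hg1 Hg2 H12) as X1.
  pose proof (frame_expand _ _ _ (dV v2 t0) Hgg H11 H22 Hg1 Hg2 H12) as X2.
  unfold cm, cn, ca, cb, mu.
  set (m := wedge3 (g t0) (v1 t0) (v2 t0)) in *.
  repeat split.
  - rewrite Xg at 1. apply V4_eq; intro k. rewrite !pc_add, !pc_scal.
    assert (lor (dV g t0) (g t0) = 0) by lra. rewrite H, Hdg1, Hdg2. ring.
  - rewrite X1 at 1. apply V4_eq; intro k. rewrite !pc_add, !pc_scal.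
    assert (lor (dV v1 t0) (g t0) = 0) by lra. assert (lor (dV v1 t0) (v1 t0) = 0) by lra.
    rewrite H, H0. ring.
  - rewrite X2 at 1. apply V4_eq; intro k. rewrite !pc_add, !pc_scal.
    assert (lor (dV v2 t0) (g t0) = 0) by lra. assert (lor (dV v2 t0) (v2 t0) = 0) by lra.
    assert (lor (dV v2 t0) (v1 t0) = - lor (dV v1 t0) (v2 t0)) by lra.
    rewrite H, H0, H1. ring.
Qed.


Lemma exp_d (f g : R -> R) t : ex_derive f t -> ex_derive g t -> ex_derive (fun s => f s + g s) t.
Proof. intros A B; exact (ex_derive_plus f g t A B). Qed.
Lemma exmi_d (f g : R -> R) t : ex_derive f t -> ex_derive g t -> ex_derive (fun s => f s - g s) t.
Proof. intros A B; exact (ex_derive_minus f g t A B). Qed.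
Lemma exm_d (f g : R -> R) t : ex_derive f t -> ex_derive g t -> ex_derive (fun s => f s * g s) t.
Proof. intros A B; exact (ex_derive_mult f g t A B). Qed.
Lemma exo_d (f : R -> R) t : ex_derive f t -> ex_derive (fun s => - f s) t.
Proof. intros A; exact (ex_derive_opp f t A). Qed.

Lemma ex_lor_wedge (x y z w : R -> V4) t :
  (forall k, ex_derive (fun s => pc k (x s)) t) ->
  (forall k, ex_derive (fun s => pc k (y s)) t) ->
  (forall k, ex_derive (fun s => pc k (z s)) t) ->
  (forall k, ex_derive (fun s => pc k (w s)) t) ->
  ex_derive (fun s => lor (x s) (wedge3 (y s) (z s) (w s))) t.
Proof.
  intros Hx Hy Hz Hw.
  pose proof (Hx 0%nat) as X0; pose proof (Hx 1%nat) as X1; pose proof (Hx 2%nat) as X2; pose proof (Hx 3%nat) as X3.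
  pose proof (Hy 0%nat) as Y0; pose proof (Hy 1%nat) as Y1; pose proof (Hy 2%nat) as Y2; pose proof (Hy 3%nat) as Y3.
  pose proof (Hz 0%nat) as Z0; pose proof (Hz 1%nat) as Z1; pose proof (Hz 2%nat) as Z2; pose proof (Hz 3%nat) as Z3.
  pose proof (Hw 0%nat) as W0; pose proof (Hw 1%nat) as W1; pose proof (Hw 2%nat) as W2; pose proof (Hw 3%nat) as W3.
  cbn [pc] in *.
  unfold lor, wedge3, det3; cbn [p0 p1 p2 p3].
  repeat match goal with
  | |- ex_derive (fun s => _ + _) _ => apply exp_d
  | |- ex_derive (fun s => _ - _) _ => apply exmi_d
  | |- ex_derive (fun s => _ * _) _ => apply exm_d
  | |- ex_derive (fun s => - _) _ => apply exo_d
  end; assumption.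
Qed.


Lemma key lo hi g v1 v2 t0 th :
  hyp_framed_curve (fun t => lo < t < hi) g v1 v2 ->
  (forall t, lo < t < hi -> ca g v1 v2 t ^ 2 + cb g v1 v2 t ^ 2 <> 0) ->
  (forall t, lo < t < hi -> cM g v1 v2 t ^ 2 > cA g v1 v2 t ^ 2) ->
  lo < t0 < hi ->
  (cM g v1 v2 t0 * Derive (cA g v1 v2) t0 - cA g v1 v2 t0 * Derive (cM g v1 v2) t0) * cos th
    - sqrt (cM g v1 v2 t0 ^ 2 - cA g v1 v2 t0 ^ 2) * cA g v1 v2 t0 * cN g v1 v2 t0 * sin th = 0 ->
  singular_point g v1 v2 t0 th.
Proof.
  intros HF Hab HMA Ht Hlam.
  destruct (frame_derivs _ _ _ _ _ _ HF Ht) as (HdG & HdV1 & HdV2).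
  destruct HF as (Hsg & Hsv1 & Hsv2 & Hc).
  assert (Eca : ex_derive (ca g v1 v2) t0).
  { unfold ca, mu. apply ex_lor_wedge; [apply (smooth_ex2 _ _ _ Hsv1 Ht)|apply (smooth_ex _ _ _ Hsg Ht)|
      apply (smooth_ex _ _ _ Hsv1 Ht)|apply (smooth_ex _ _ _ Hsv2 Ht)]. }
  assert (Ecb : ex_derive (cb g v1 v2) t0).
  { unfold cb, mu. apply ex_lor_wedge; [apply (smooth_ex2 _ _ _ Hsv2 Ht)|apply (smooth_ex _ _ _ Hsg Ht)|
      apply (smooth_ex _ _ _ Hsv1 Ht)|apply (smooth_ex _ _ _ Hsv2 Ht)]. }
  assert (EcM : ex_derive (cM g v1 v2) t0).
  { unfold cM, cm, mu. apply ex_lor_wedge; [apply (smooth_ex2 _ _ _ Hsg Ht)|apply (smooth_ex _ _ _ Hsg Ht)|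
      apply (smooth_ex _ _ _ Hsv1 Ht)|apply (smooth_ex _ _ _ Hsv2 Ht)]. }
  pose proof (Derive_correct _ _ Eca) as Dca.
  pose proof (Derive_correct _ _ Ecb) as Dcb.
  pose proof (Derive_correct _ _ EcM) as DcM.
  pose proof (isDV_ex g t0 (smooth_ex _ _ _ Hsg Ht)) as Dg.
  pose proof (isDV_ex v1 t0 (smooth_ex _ _ _ Hsv1 Ht)) as Dv1.
  pose proof (isDV_ex v2 t0 (smooth_ex _ _ _ Hsv2 Ht)) as Dv2.
  assert (HQ : 0 < ca g v1 v2 t0 ^ 2 + cb g v1 v2 t0 ^ 2).
  { pose proof (Hab t0 Ht). assert (0 <= ca g v1 v2 t0 ^ 2) by (apply pow2_ge_0).
    assert (0 <= cb g v1 v2 t0 ^ 2) by (apply pow2_ge_0). lra. }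
  assert (HA : cA g v1 v2 t0 = sqrt (ca g v1 v2 t0 ^ 2 + cb g v1 v2 t0 ^ 2)) by reflexivity.
  assert (HApos : 0 < cA g v1 v2 t0) by (rewrite HA; apply sqrt_lt_R0; exact HQ).
  assert (HA2 : cA g v1 v2 t0 ^ 2 = ca g v1 v2 t0 ^ 2 + cb g v1 v2 t0 ^ 2).
  { rewrite HA. rewrite <- Rsqr_pow2. apply Rsqr_sqrt. lra. }
  assert (HdA : is_derive (cA g v1 v2) t0
     ((ca g v1 v2 t0 * Derive (ca g v1 v2) t0 + cb g v1 v2 t0 * Derive (cb g v1 v2) t0) / cA g v1 v2 t0)).
  { unfold cA at 1. eapply is_derive_val.
    { apply sqrt_d; [apply plus_d; apply pow2_d; eassumption | exact HQ]. }
    cbv beta. rewrite <- HA. field. lra. }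
  assert (HSpos : 0 < cM g v1 v2 t0 ^ 2 - cA g v1 v2 t0 ^ 2) by (pose proof (HMA t0 Ht); lra).
  assert (Dn1 : isDV (fn1 g v1 v2) t0
    (vadd (vscal (cN g v1 v2 t0) (fn2 g v1 v2 t0)) (vscal (cA g v1 v2 t0) (mu g v1 v2 t0)))).
  { eapply isDV_val.
    { unfold fn1. apply isDV_scal.
      - apply inv_d; [exact HdA | lra].
      - apply isDV_add; apply isDV_scal; eassumption. }
    rewrite HdV1, HdV2. unfold fn2, cN, cf.
    apply V4_eq; intro k. repeat first [rewrite pc_add | rewrite pc_scal].
    replace (cA g v1 v2 t0 * pc k (mu g v1 v2 t0)) with
      ((ca g v1 v2 t0 ^ 2 + cb g v1 v2 t0 ^ 2) / cA g v1 v2 t0 * pc k (mu g v1 v2 t0))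
      by (rewrite <- HA2; field; lra).
    rewrite HA2. field. lra. }
  assert (Dn2 : isDV (fn2 g v1 v2) t0 (vscal (- cN g v1 v2 t0) (fn1 g v1 v2 t0))).
  { eapply isDV_val.
    { unfold fn2. apply isDV_scal.
      - apply inv_d; [exact HdA | lra].
      - apply isDV_add; apply isDV_scal; try eassumption. apply opp_d; eassumption. }
    rewrite HdV1, HdV2. unfold fn1, cN, cf.
    apply V4_eq; intro k. repeat first [rewrite pc_add | rewrite pc_scal].
    rewrite HA2. field. lra. }
  assert (HS0 : sqrt (cM g v1 v2 t0 ^ 2 - cA g v1 v2 t0 ^ 2) <> 0)
    by (apply Rgt_not_eq; apply sqrt_lt_R0; exact HSpos).
  eassert (DFt : isDV (fun s => focalD g v1 v2 s th) t0 _).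
  { unfold focalD. apply isDV_add.
    - apply isDV_scal.
      + apply (is_derive_ext (fun s => cos th * / sqrt (cM g v1 v2 s ^ 2 - cA g v1 v2 s ^ 2))); [intro s; reflexivity|].
        apply mult_d; [apply const_d|]. apply inv_d; [|exact HS0].
        apply sqrt_d; [apply minus_d; apply pow2_d; eassumption | exact HSpos].
      + apply isDV_add; apply isDV_scal; [exact HdA | exact Dg | apply opp_d; exact DcM | exact Dn1].
    - apply isDV_scal; [apply const_d | exact Dn2]. }
  eassert (DFth : isDV (fun s => focalD g v1 v2 t0 s) th _).
  { unfold focalD. apply isDV_add.
    - apply isDV_scal; [apply cosdiv_d | apply isDV_const].
    - apply isDV_scal; [apply sin_d | apply isDV_const]. }
  exists 1, (cM g v1 v2 t0 * cN g v1 v2 t0 / sqrt (cM g v1 v2 t0 ^ 2 - cA g v1 v2 t0 ^ 2)).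
  split; [left; lra|].
  unfold focalD_t, focalD_th. rewrite (isDV_dV _ _ _ DFt), (isDV_dV _ _ _ DFth). rewrite HdG.
  apply V4_eq; intro k. rewrite pc_zero. repeat first [rewrite pc_add | rewrite pc_scal].
  rewrite !pc_zero.
  change (cm g v1 v2 t0) with (cM g v1 v2 t0).
  rewrite (is_derive_unique _ _ _ HdA) in Hlam.
  set (Ap := (ca g v1 v2 t0 * Derive (ca g v1 v2) t0 + cb g v1 v2 t0 * Derive (cb g v1 v2) t0) / cA g v1 v2 t0) in *.
  set (Mp := Derive (cM g v1 v2) t0) in *.
  set (M := cM g v1 v2 t0) in *.
  set (A := cA g v1 v2 t0) in *.
  set (N := cN g v1 v2 t0) in *.
  assert (HS2 : sqrt (M ^ 2 - A ^ 2) ^ 2 = M ^ 2 - A ^ 2).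
  { rewrite <- Rsqr_pow2. apply Rsqr_sqrt. lra. }
  set (S := sqrt (M ^ 2 - A ^ 2)) in *.
  assert (HSp : 0 < S) by (apply sqrt_lt_R0; exact HSpos).
  generalize (pc k (g t0)) as xg. generalize (pc k (fn1 g v1 v2 t0)) as x1.
  generalize (pc k (fn2 g v1 v2 t0)) as x2. generalize (pc k (mu g v1 v2 t0)) as xm.
  intros xm x2 x1 xg.
  match goal with |- ?L = 0 => let L' := eval pattern xg, x1, x2, xm in L in change (L' = 0) end.
  apply lin4.
  - intros; cbv beta; ring.
  - cbv beta. apply (Rmult_eq_reg_r (S ^ 3)); [|apply pow_nonzero; lra].
    transitivity (M * ((M * Ap - A * Mp) * cos th - S * A * N * sin th) + cos th * Ap * (S ^ 2 - (M ^ 2 - A ^ 2))).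
    + field. lra.
    + rewrite Hlam, HS2. ring.
  - cbv beta. apply (Rmult_eq_reg_r (S ^ 3)); [|apply pow_nonzero; lra].
    transitivity (- A * ((M * Ap - A * Mp) * cos th - S * A * N * sin th) + (S ^ 2 - (M ^ 2 - A ^ 2)) * (- cos th * Mp - sin th * N * S)).
    + field. lra.
    + rewrite Hlam, HS2. ring.
  - cbv beta. unfold Rdiv; ring.
  - cbv beta. unfold Rdiv; ring.
Qed.


Lemma cont_lam (D C : R) : continuity (fun x => D * cos x - C * sin x).
Proof.
  intro x. apply continuity_pt_filterlim. apply (ex_derive_continuous (fun x => D * cos x - C * sin x)). auto_derive. exact I.
Qed.

Theorem mainTheorem3 (lo hi : R) (g v1 v2 : R -> V4) (t0 : R) :
  lo < hi ->
  hyp_framed_curve (fun t => lo < t < hi) g v1 v2 ->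
  (forall t, lo < t < hi -> ca g v1 v2 t ^ 2 + cb g v1 v2 t ^ 2 <> 0) ->
  (forall t, lo < t < hi -> cM g v1 v2 t ^ 2 > cA g v1 v2 t ^ 2) ->
  lo < t0 < hi ->
  ((cM g v1 v2 t0 * Derive (cA g v1 v2) t0 - cA g v1 v2 t0 * Derive (cM g v1 v2) t0 = 0
     /\ cN g v1 v2 t0 = 0) ->
     forall th, 0 <= th <= 2 * PI -> singular_point g v1 v2 t0 th) /\
  (~ (cM g v1 v2 t0 * Derive (cA g v1 v2) t0 - cA g v1 v2 t0 * Derive (cM g v1 v2) t0 = 0
     /\ cN g v1 v2 t0 = 0) ->
     exists th0, 0 <= th0 <= 2 * PI /\ singular_point g v1 v2 t0 th0).
Proof.
  intros Hlh HF Hab HMA Ht. split.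
  - intros [HD HN] th _. apply (key lo hi); auto. rewrite HD, HN. ring.
  - intros _.
    set (D := cM g v1 v2 t0 * Derive (cA g v1 v2) t0 - cA g v1 v2 t0 * Derive (cM g v1 v2) t0).
    set (C := sqrt (cM g v1 v2 t0 ^ 2 - cA g v1 v2 t0 ^ 2) * cA g v1 v2 t0 * cN g v1 v2 t0).
    destruct (IVT_cor (fun x => D * cos x - C * sin x) 0 PI (cont_lam D C)) as [z [Hz Hfz]].
    + pose proof PI_RGT_0; lra.
    + rewrite cos_0, sin_0, cos_PI, sin_PI. nra.
    + exists z. split; [pose proof PI_RGT_0; lra|].
      apply (key lo hi); try assumption.
Qed.
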